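(* Let $q=2^f\geq 4$ and $I=\{0,\ f,\ 2f/\gcd(3,f),\ 4f/\gcd(3,f)\}$. Let $b\in\mathbb{F}_{q^2}^\times$ with $b+b^q=1$ and $b^{q+1}\neq 1$, and let $a\in\mathbb{F}_{q^2}^\times$ have order $q+1$ and satisfy: $(1+b+b^2)^{2^i}\neq a+a^{-1}+1$ for all $i\in I$; $(1+b+b^2)^{2^i}\neq a(1+b+b^3+b^4)+a^{-1}(b^2+b^3+b^4)$ for all $i\in I$; $a+a^{-1}+1\neq a(1+b+b^3+b^4)+a^{-1}(b^2+b^3+b^4)$; and $a+a^{-1}+1\neq 0$. Let \[ X=\begin{pmatrix}b&1&1\\ b^q&0&1\\ b^{q+1}&b&b^q\end{pmatrix},\quad Y=\begin{pmatrix}ab+a^{-1}b^q&0&a(b+b^{q+1})+a^{-1}(b^q+b^{q+1})\\ 0&1&0\\ a+a^{-1}&0&ab+a^{-1}b^q\end{pmatrix},\quad Z=\begin{pmatrix}1&0&1\\ 0&1&0\\ 0&0&1\end{pmatrix}. \] Then $\langle X,Y,Z\rangle$ is an irreducible subgroup of $\mathrm{SU}_3(q)$, i.e. it stabilizes no subspace of $\mathbb{F}_{q^2}^3$ of dimension $1$ or $2$.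
   Context: Here $\mathrm{SU}_3(q)=\{A\in\mathrm{SL}_3(q^2): \overline{A}^{T}WA=W\}$, where $\overline{(a_{ij})}=(a_{ij}^q)$ and $W=\begin{pmatrix}0&0&1\\0&1&0\\1&0&0\end{pmatrix}$; matrices act on row vectors in $\mathbb{F}_{q^2}^3$ by right multiplication. *)

(* Defs.v *)
From HB Require Import structures.
From mathcomp Require Import all_boot all_order all_algebra all_field.
Set Implicit Arguments. Unset Strict Implicit. Unset Printing Implicit Defensive.
Import GRing.Theory.
Local Open Scope ring_scope.

Definition mx3 (R : Type) (x00 x01 x02 x10 x11 x12 x20 x21 x22 : R) : 'M[R]_3 :=
  \matrix_(i < 3, j < 3)
    match val i, val j with
    | 0, 0 => x00 | 0, 1 => x01 | 0, _ => x02
    | 1, 0 => x10 | 1, 1 => x11 | 1, _ => x12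
    | _, 0 => x20 | _, 1 => x21 | _, _ => x22
    end%N.

Definition Wmx (F : fieldType) : 'M[F]_3 := mx3 0 0 1 0 1 0 1 0 0.

Definition SU3 (F : fieldType) (q : nat) : pred 'M[F]_3 :=
  [pred A | (\det A == 1) &&
    ((map_mx (fun x => x ^+ q) A)^T *m Wmx F *m A == Wmx F)].

Inductive in_gen (F : fieldType) (S : seq 'M[F]_3) : 'M[F]_3 -> Prop :=
  | gen_base g : g \in S -> in_gen S g
  | gen_one : in_gen S 1%:M
  | gen_mul g h : in_gen S g -> in_gen S h -> in_gen S (g *m h)
  | gen_inv g : in_gen S g -> in_gen S (invmx g).

(* g stabilizes the row space of U (vectors act by right multiplication) *)
Definition stabilizes (F : fieldType) (U g : 'M[F]_3) : bool := (U *m g <= U)%MS.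

(* Main.v *)
Require Import Defs.
From HB Require Import structures.
From mathcomp Require Import all_boot all_order all_algebra all_field.
Import GRing.Theory.
Local Open Scope ring_scope.
From mathcomp Require Import ring.

Lemma det3 (R : comNzRingType) (x00 x01 x02 x10 x11 x12 x20 x21 x22 : R) :
  \det (mx3 x00 x01 x02 x10 x11 x12 x20 x21 x22) =
  x00 * (x11 * x22 - x12 * x21) - x01 * (x10 * x22 - x12 * x20) + x02 * (x10 * x21 - x11 * x20).
Proof.
rewrite (expand_det_row _ ord0) !big_ord_recr big_ord0 /= add0r.
rewrite /cofactor !(expand_det_row _ ord0) !big_ord_recr !big_ord0 /= !add0r.
rewrite /cofactor !det_mx11 !mxE /= !add0n.
ring.
Qed.

Lemma mul3 (R : comNzRingType) (x00 x01 x02 x10 x11 x12 x20 x21 x22 : R)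
  (y00 y01 y02 y10 y11 y12 y20 y21 y22 : R) :
  mx3 x00 x01 x02 x10 x11 x12 x20 x21 x22 *m mx3 y00 y01 y02 y10 y11 y12 y20 y21 y22 =
  mx3 (x00*y00 + x01*y10 + x02*y20) (x00*y01 + x01*y11 + x02*y21) (x00*y02 + x01*y12 + x02*y22)
      (x10*y00 + x11*y10 + x12*y20) (x10*y01 + x11*y11 + x12*y21) (x10*y02 + x11*y12 + x12*y22)
      (x20*y00 + x21*y10 + x22*y20) (x20*y01 + x21*y11 + x22*y21) (x20*y02 + x21*y12 + x22*y22).
Proof.
apply/matrixP => i j; rewrite !mxE !big_ord_recr big_ord0 /= add0r !mxE /=.
by case: i => [[|[|[|i]]] Hi] //; case: j => [[|[|[|j]]] Hj].
Qed.

Lemma tr3 (R : Type) (x00 x01 x02 x10 x11 x12 x20 x21 x22 : R) :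
  (mx3 x00 x01 x02 x10 x11 x12 x20 x21 x22)^T = mx3 x00 x10 x20 x01 x11 x21 x02 x12 x22.
Proof.
apply/matrixP => i j; rewrite !mxE /=.
by case: i => [[|[|[|i]]] Hi] //; case: j => [[|[|[|j]]] Hj].
Qed.

Lemma map3 (R S : Type) (g : R -> S) (x00 x01 x02 x10 x11 x12 x20 x21 x22 : R) :
  map_mx g (mx3 x00 x01 x02 x10 x11 x12 x20 x21 x22) =
  mx3 (g x00) (g x01) (g x02) (g x10) (g x11) (g x12) (g x20) (g x21) (g x22).
Proof.
apply/matrixP => i j; rewrite !mxE /=.
by case: i => [[|[|[|i]]] Hi] //; case: j => [[|[|[|j]]] Hj].
Qed.

Definition r3 {R : Type} (x y z : R) : 'rV[R]_3 :=
  \row_(j < 3) match val j with 0 => x | 1 => y | _ => z end%N.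

Lemma r3mul (R : comNzRingType) (x y z : R) (x00 x01 x02 x10 x11 x12 x20 x21 x22 : R) :
  r3 x y z *m mx3 x00 x01 x02 x10 x11 x12 x20 x21 x22 =
  r3 (x*x00 + y*x10 + z*x20) (x*x01 + y*x11 + z*x21) (x*x02 + y*x12 + z*x22).
Proof.
apply/matrixP => i j; rewrite !mxE !big_ord_recr big_ord0 /= add0r !mxE /=.
by case: j => [[|[|[|j]]] Hj].
Qed.

Lemma r3comb (R : comNzRingType) (x y z x' y' z' c : R) :
  r3 x y z + c *: r3 x' y' z' = r3 (x + c * x') (y + c * y') (z + c * z').
Proof.
apply/matrixP => i j; rewrite !mxE /=.
by case: j => [[|[|[|j]]] Hj].
Qed.

Lemma r3Z (R : comNzRingType) (x y z c : R) :
  c *: r3 x y z = r3 (c * x) (c * y) (c * z).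
Proof.
apply/matrixP => i j; rewrite !mxE /=.
by case: j => [[|[|[|j]]] Hj].
Qed.

Lemma r3E (R : Type) (u : 'rV[R]_3) : u = r3 (u 0 0) (u 0 1) (u 0 2).
Proof.
apply/matrixP => i j; rewrite !mxE /= (ord1 i).
by case: j => [[|[|[|j]]] Hj] //=; congr (u _ _); apply: val_inj.
Qed.

Lemma row1_3 (R : comNzRingType) (i : 'I_3) :
  row i (1%:M : 'M[R]_3) \in [:: r3 1 0 0; r3 0 1 0; r3 0 0 1].
Proof.
case: i => [[|[|[|i]]] Hi]; rewrite !inE; apply/or3P;
  [apply: Or31 | apply: Or32 | apply: Or33 | by []]; apply/eqP/matrixP => k j;
  by rewrite !mxE /=; case: j => [[|[|[|j]]] Hj]; rewrite /= ?eqE /=.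
Qed.

Lemma char2E (F : fieldType) (x y k : F) : 2 = 0 :> F -> x - y = 2 * k -> x = y.
Proof. by move=> h2 /eqP; rewrite h2 mul0r subr_eq0 => /eqP. Qed.

Lemma test (F : finFieldType) (f : nat) (a b : F) :
  (2 <= f)%N ->
  #|F| = ((2 ^ f) ^ 2)%N ->
  let q := (2 ^ f)%N in b != 0 -> b + b ^+ q = 1 -> 
 (mx3 b 1 1 (b ^+ q) 0 1 (b ^+ q.+1) b (b ^+ q)) \in SU3 q.
Proof.
move=> hf hF q b0 bq1.
have ch2 : (2 \in [pchar F])%N.
  by apply: (card_finPcharP (n := (f * 2)%N)); rewrite // hF expnM.
have h2 : 2 = 0 :> F by exact: pcharf0 ch2.
have phiD (x y : F) : (x + y) ^+ q = x ^+ q + y ^+ q.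
  by apply: exprDn_pchar; rewrite (eq_pnat _ (pcharf_eq ch2)) pnatX pnat_id.
have q0 : (0 < q)%N by rewrite expn_gt0.
have bqq : (b ^+ q) ^+ q = b by rewrite -exprM mulnn -hF expf_card.
have bqE : b ^+ q = 1 - b by rewrite -bq1 addrC addKr.
rewrite inE /=; apply/andP; split; apply/eqP.
  rewrite det3 exprS bqE.
  apply: (@char2E _ _ _ (- 1%:R + 2%:R * b ^+ 1 - 2%:R * b ^+ 2) h2); ring.
rewrite map3 tr3 /Wmx !mul3 !expr1n expr0n eqn0Ngt q0 /= bqq exprS exprMn bqq bqE.
congr mx3.
all: try ring.
  apply: (@char2E _ _ _ (b ^+ 1 - b ^+ 2) h2); ring.
  apply: (@char2E _ _ _ (b ^+ 1 - b ^+ 2) h2); ring.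
  apply: (@char2E _ _ _ (b ^+ 1 - b ^+ 2) h2); ring.
  apply: (@char2E _ _ _ (1%:R - b ^+ 1) h2); ring.
  apply: (@char2E _ _ _ (b ^+ 1) h2); ring.
  apply: (@char2E _ _ _ (1%:R) h2); ring.
Qed.


Theorem lemma3p5 (F : finFieldType) (f : nat) (a b : F) :
  (2 <= f)%N ->
  #|F| = ((2 ^ f) ^ 2)%N ->
  let q := (2 ^ f)%N in
  let I := [:: 0%N; f; (2 * f) %/ gcdn 3 f; (4 * f) %/ gcdn 3 f]%N in
  b != 0 ->
  b + b ^+ q = 1 ->
  b ^+ q.+1 != 1 ->
  a != 0 ->
  (q.+1).-primitive_root a ->
  (forall i, i \in I -> (1 + b + b ^+ 2) ^+ (2 ^ i) != a + a^-1 + 1) ->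
  (forall i, i \in I -> (1 + b + b ^+ 2) ^+ (2 ^ i) !=
       a * (1 + b + b ^+ 3 + b ^+ 4) + a^-1 * (b ^+ 2 + b ^+ 3 + b ^+ 4)) ->
  a + a^-1 + 1 != a * (1 + b + b ^+ 3 + b ^+ 4) + a^-1 * (b ^+ 2 + b ^+ 3 + b ^+ 4) ->
  a + a^-1 + 1 != 0 ->
  let X := mx3 b 1 1
               (b ^+ q) 0 1
               (b ^+ q.+1) b (b ^+ q) in
  let Y := mx3 (a * b + a^-1 * b ^+ q) 0 (a * (b + b ^+ q.+1) + a^-1 * (b ^+ q + b ^+ q.+1))
               0 1 0
               (a + a^-1) 0 (a * b + a^-1 * b ^+ q) in
  let Z := mx3 1 0 1
               0 1 0
               0 0 (1 : F) in
  (forall g, in_gen [:: X; Y; Z] g -> g \in SU3 q) /\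
  (forall U : 'M[F]_3, (\rank U = 1 \/ \rank U = 2)%N ->
     ~ (forall g, in_gen [:: X; Y; Z] g -> stabilizes U g)).

Proof.
move=> hf hF q I b0 bq1 bqn1 a0 pa _ _ _ _ X Y Z.
have ch2 : (2 \in [pchar F])%N.
  by apply: (card_finPcharP (n := (f * 2)%N)); rewrite // hF expnM.
have h2 : 2 = 0 :> F by exact: pcharf0 ch2.
have phiD (x y : F) : (x + y) ^+ q = x ^+ q + y ^+ q.
  by apply: exprDn_pchar; rewrite (eq_pnat _ (pcharf_eq ch2)) pnatX pnat_id.
have q0 : (0 < q)%N by rewrite expn_gt0.
have q4 : (4 <= q)%N by rewrite /q (leq_exp2l 2 f (isT : (1 < 2)%N)) in hf *.
have bqq : (b ^+ q) ^+ q = b by rewrite -exprM mulnn -hF expf_card.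
have bqE : b ^+ q = 1 - b by rewrite -bq1 addrC addKr.
have aq : a ^+ q = a^-1.
  by rewrite -[LHS]mulr1 -(mulfV a0) mulrA -exprSr prim_expr_order // mul1r.
have aiq : a^-1 ^+ q = a by rewrite exprVn aq invrK.
have hX : X \in SU3 q.
  rewrite inE /=; apply/andP; split; apply/eqP.
    rewrite det3 exprS bqE.
    apply: (@char2E _ _ _ (- 1%:R + 2%:R * b ^+ 1 - 2%:R * b ^+ 2) h2); ring.
  rewrite map3 tr3 /Wmx !mul3 !expr1n expr0n eqn0Ngt q0 /= bqq exprS exprMn bqq bqE.
  congr mx3.
  all: try ring.
    apply: (@char2E _ _ _ (b ^+ 1 - b ^+ 2) h2); ring.
    apply: (@char2E _ _ _ (b ^+ 1 - b ^+ 2) h2); ring.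
    apply: (@char2E _ _ _ (b ^+ 1 - b ^+ 2) h2); ring.
    apply: (@char2E _ _ _ (1%:R - b ^+ 1) h2); ring.
    apply: (@char2E _ _ _ (b ^+ 1) h2); ring.
  apply: (@char2E _ _ _ (1%:R) h2); ring.
have hY : Y \in SU3 q.
  rewrite inE /=; apply/andP; split; apply/eqP.
    rewrite det3 exprS bqE.
    by apply: (@char2E _ _ _ (- a^-1 ^+ 2 * b ^+ 1 + a^-1 ^+ 2 * b ^+ 2 - 1%:R - a ^+ 2 * b ^+ 1 + a ^+ 2 * b ^+ 2) h2); field.
  rewrite map3 tr3 /Wmx !mul3 !expr1n expr0n eqn0Ngt q0 /= [b ^+ q.+1]exprS.
  rewrite ?phiD ?exprMn ?phiD ?exprMn aq aiq bqq bqE.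
  congr mx3.
  all: try by field.
  by apply: (@char2E _ _ _ (a^-1 ^+ 2 - a^-1 ^+ 2 * b ^+ 1 + 1%:R + a ^+ 2 * b ^+ 1) h2); field.
  by apply: (@char2E _ _ _ (a^-1 ^+ 2 - a^-1 ^+ 2 * b ^+ 1 + 2%:R * b ^+ 1 - 2%:R * b ^+ 2 + a ^+ 2 * b ^+ 1) h2); field.
  by apply: (@char2E _ _ _ (a^-1 ^+ 2 - a^-1 ^+ 2 * b ^+ 1 + 2%:R * b ^+ 1 - 2%:R * b ^+ 2 + a ^+ 2 * b ^+ 1) h2); field.
  by apply: (@char2E _ _ _ (a^-1 ^+ 2 - a^-1 ^+ 2 * b ^+ 1 - a^-1 ^+ 2 * b ^+ 2 + a^-1 ^+ 2 * b ^+ 3 + 3%:R * b ^+ 1 - 3%:R * b ^+ 2 + 2%:R * a ^+ 2 * b ^+ 2 - a ^+ 2 * b ^+ 3) h2); field.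
have hZ : Z \in SU3 q.
  rewrite inE /=; apply/andP; split; apply/eqP.
    rewrite det3; ring.
  rewrite map3 tr3 /Wmx !mul3 !expr1n expr0n eqn0Ngt q0 /=.
  congr mx3.
  all: try ring.
  by apply: (@char2E _ _ _ (1%:R) h2); field.
pose cj (A : 'M[F]_3) := map_mx (fun x => x ^+ q) A.
have cjM (A B : 'M[F]_3) : cj (A *m B) = cj A *m cj B.
  apply/matrixP => i j; rewrite !mxE.
  have phi0 : (0 : F) ^+ q = 0 by rewrite expr0n eqn0Ngt q0.
  rewrite (big_morph (fun x : F => x ^+ q) phiD phi0).
  by apply: eq_bigr => k _; rewrite !mxE exprMn.
have cj1 : cj 1%:M = 1%:M.
  apply/matrixP => i j; rewrite !mxE; case: (i == j); rewrite /= ?mulr1n ?mulr0n ?expr1n //.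
  by rewrite expr0n eqn0Ngt q0.
have SU3P (A : 'M[F]_3) : reflect (\det A = 1 /\ (cj A)^T *m Wmx F *m A = Wmx F) (A \in SU3 q).
  by rewrite inE /=; apply: (iffP andP) => -[/eqP h1 /eqP h3].
split.
  move=> g; elim => {g} [g hg | | g h _ hg _ hh | g _ hg].
  - by move: hg; rewrite !inE => /or3P [/eqP->|/eqP->|/eqP->].
  - by apply/SU3P; rewrite det1 cj1 trmx1 mul1mx mulmx1.
  - move/SU3P: hg => [dg eg]; move/SU3P: hh => [dh eh]; apply/SU3P; split.
      by rewrite det_mulmx dg dh mulr1.
    have E := congr1 (fun M => (cj h)^T *m M *m h) eg; rewrite /= eh in E.
    by apply: etrans _ E; rewrite cjM trmx_mul !mulmxA.
  - move/SU3P: hg => [dg eg]; apply/SU3P.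
    have ug : g \in unitmx by rewrite unitmxE dg unitr1.
    have gV := mulmxV ug.
    split.
      by move: (det_mulmx g (invmx g)); rewrite gV det1 dg mul1r.
    have := cjM g (invmx g); rewrite gV cj1 => cgV.
    have E := congr1 (fun M => (cj (invmx g))^T *m M *m (invmx g)) eg; rewrite /= in E.
    have E2 : (cj g *m cj (invmx g))^T *m Wmx F *m (g *m invmx g) = Wmx F.
      by rewrite -cgV gV trmx1 mul1mx mulmx1.
    by rewrite -E; apply: etrans _ E2; rewrite trmx_mul !mulmxA.
move=> U hU hst.
have sub (g : 'M[F]_3) : g \in [:: X; Y; Z] -> forall u : 'rV[F]_3, (u <= U)%MS -> (u *m g <= U)%MS.
  by move=> hg u hu; apply: submx_trans (submxMr g hu) _; exact: (hst g (gen_base hg)).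
have sX : forall u : 'rV[F]_3, (u <= U)%MS -> (u *m X <= U)%MS.
  by apply: sub; rewrite !inE eqxx.
have sY : forall u : 'rV[F]_3, (u <= U)%MS -> (u *m Y <= U)%MS.
  by apply: sub; rewrite !inE eqxx orbT.
have sZ : forall u : 'rV[F]_3, (u <= U)%MS -> (u *m Z <= U)%MS.
  by apply: sub; rewrite !inE eqxx !orbT.
have comb (u w : 'rV[F]_3) c : (u <= U)%MS -> (w <= U)%MS -> ((u + c *: w)%R <= U)%MS.
  by move=> hu hw; rewrite addmx_sub // scalemx_sub.
have r3s (x y z x' y' z' : F) : x = x' -> y = y' -> z = z' -> (r3 x y z <= U)%MS -> (r3 x' y' z' <= U)%MS.
  by move=> -> -> ->.
have c0 : a + a^-1 != 0.
  apply/eqP => h.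
  have a21 : a ^+ 2 = 1.
    have : a * (a + a^-1) = 0 by rewrite h mulr0.
    rewrite mulrDr mulfV // -expr2 => /eqP; rewrite addr_eq0 => /eqP ->.
    by apply/eqP; rewrite eq_sym -addr_eq0 -mulr2n h2.
  have : (q.+1 %| 2)%N by rewrite (prim_order_dvd pa) a21.
  by move/(dvdn_leq (isT : (0 < 2)%N)); rewrite ltnS leqNgt (leq_trans _ q4).
have L3 : (r3 0 0 1 <= U)%MS -> (1%:M <= U)%MS.
  move=> e3.
  have e3Y := sY _ e3; rewrite /Y r3mul in e3Y.
  have e1' := comb _ _ (- (a * b + a^-1 * b ^+ q)) e3Y e3; rewrite r3comb in e1'.
  have e1'' := scalemx_sub (a + a^-1)^-1 e1'; rewrite r3Z in e1''.
  have e1 : (r3 1 0 0 <= U)%MS.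
    apply: (r3s _ _ _ _ _ _ _ _ _ e1'').
    - by rewrite !(mul0r, mulr0, add0r, addr0, mul1r) mulVf.
    - by rewrite !(mul0r, mulr0, add0r, addr0).
    - by rewrite !(mul0r, add0r, mul1r, mulr1) subrr mulr0.
  have e1X := sX _ e1; rewrite /X r3mul in e1X.
  have e2' := comb _ _ (- b) e1X e1; rewrite r3comb in e2'.
  have e2'' := comb _ _ (- 1) e2' e3; rewrite r3comb in e2''.
  have e2 : (r3 0 1 0 <= U)%MS by apply: (r3s _ _ _ _ _ _ _ _ _ e2''); ring.
  apply/row_subP => i; move: (row1_3 F i); rewrite !inE => /or3P [/eqP->|/eqP->|/eqP->] //.
have L1 (x y z : F) : x != 0 -> (r3 x y z <= U)%MS -> (r3 0 0 1 <= U)%MS.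
  move=> x0 hw; have hwZ := sZ _ hw; rewrite /Z r3mul in hwZ.
  have h' := comb _ _ (- 1) hwZ hw; rewrite r3comb in h'.
  have h'' := scalemx_sub x^-1 h'; rewrite r3Z in h''.
  by apply: (r3s _ _ _ _ _ _ _ _ _ h''); field.
suff : (1%:M <= U)%MS.
  by move/mxrankS; rewrite mxrank1; case: hU => ->.
apply: L3.
have Un0 : U != 0 by rewrite -mxrank_eq0; case: hU => ->.
have [i hi] : exists i, row i U != 0.
  apply/existsP; apply: contraR Un0 => /existsPn h; apply/eqP/row_matrixP => i.
  by rewrite row0; move/negPn/eqP: (h i).
have hv := row_sub i U; rewrite (@r3E _ (row i U)) in hv hi.
move: hv hi; set x := row i U 0 0; set y := row i U 0 1; set z := row i U 0 2 => hv hi.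
have [x0|x0] := eqVneq x 0; last exact: L1 x0 hv.
rewrite x0 in hv hi.
have [z0|z0] := eqVneq z 0; first last.
  have hvY := sY _ hv; rewrite /Y r3mul in hvY.
  apply: (L1 _ _ _ _ hvY).
  by rewrite mul0r mulr0 add0r add0r mulf_neq0.
rewrite z0 in hv hi.
have y0 : y != 0.
  apply: contraNneq hi => ->; apply/eqP/matrixP => k j; rewrite !mxE.
  by case: j => [[|[|[|j]]] Hj].
have hvX := sX _ hv; rewrite /X r3mul in hvX.
apply: (L1 _ _ _ _ hvX).
by rewrite !mul0r add0r addr0 mulf_neq0 // expf_neq0.
Qed.
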